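(* For every $\epsilon\in(\tfrac12,1)$ there exists a forecasting competition (as defined in the context), with some number of events $m$ and some number of forecasters $n$, such that $p_0=\frac{2-\epsilon}{n}$ and the competition has no pure Nash equilibrium.
   Context: A forecasting competition with $m$ binary events and $n$ forecasters is the following game. Let $\mathcal{Y}=\{0,1\}^m$, $\mathcal{X}=[0,1]^m$, $Q$ a probability distribution on $\mathcal{Y}$, and $d(x,y)=\|x-y\|_2$. Each forecaster $i\in[n]$ chooses $x_i\in\mathcal{X}$; write $\bm{x}=(x_1,\dots,x_n)$ and $X_{\min}(\bm{x},y)=\arg\min_{x_j\in\bm{x}}\|x_j-y\|_2$. Forecaster $i$'s utility is $u_i(x_i,\bm{x}_{-i})=\mathbb{E}_{y\sim Q}\big[\mathbb{1}[x_i\in X_{\min}(\bm{x},y)]/|X_{\min}(\bm{x},y)|\big]$. Let $p_0=\min_{y\in\{0,1\}^m}Q(y)$. A pure Nash equilibrium is $\bm{x}$ with $u_i(x_i',\bm{x}_{-i})\le u_i(x_i,\bm{x}_{-i})$ for all $i$ and $x_i'\in\mathcal{X}$. *)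

(* Defs.v *)
From HB Require Import structures.
From mathcomp Require Import all_boot all_order all_algebra.
From mathcomp Require Import reals.
Set Implicit Arguments. Unset Strict Implicit. Unset Printing Implicit Defensive.
Import Order.TTheory GRing.Theory Num.Theory.
Local Open Scope ring_scope.

Section Forecast.
Variable R : realType.

Definition outcome (m : nat) := {ffun 'I_m -> bool}.

Definition in_cube (m : nat) (x : 'I_m -> R) : Prop :=
  forall k, 0 <= x k <= 1.

Definition is_distr (m : nat) (Q : outcome m -> R) : Prop :=
  (forall y, 0 <= Q y) /\ \sum_(y : outcome m) Q y = 1.

Definition dist (m : nat) (x : 'I_m -> R) (y : outcome m) : R :=
  Num.sqrt (\sum_(k < m) (x k - (y k)%:R) ^+ 2).

Definition Xmin (m n : nat) (x : 'I_n -> 'I_m -> R) (y : outcome m) : {set 'I_n} :=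
  [set j : 'I_n | [forall k : 'I_n, dist (x j) y <= dist (x k) y]].

Definition utility (m n : nat) (Q : outcome m -> R) (x : 'I_n -> 'I_m -> R)
  (i : 'I_n) : R :=
  \sum_(y : outcome m) Q y * ((i \in Xmin x y)%:R / (#|Xmin x y|)%:R).

Definition deviate (m n : nat) (x : 'I_n -> 'I_m -> R) (i : 'I_n) (x' : 'I_m -> R)
  : 'I_n -> 'I_m -> R :=
  fun j => if j == i then x' else x j.

Definition pure_NE (m n : nat) (Q : outcome m -> R) (x : 'I_n -> 'I_m -> R) : Prop :=
  (forall j, in_cube (x j)) /\
  forall (i : 'I_n) (x' : 'I_m -> R), in_cube x' ->
    utility Q (deviate x i x') i <= utility Q x i.

Definition p0 (m : nat) (Q : outcome m -> R) : R :=
  \big[Num.min/Q [ffun => false]]_(y : outcome m) Q y.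

End Forecast.

(* Main.v *)
Require Import Defs.
From HB Require Import structures.
From mathcomp Require Import all_boot all_order all_algebra.
From mathcomp Require Import reals.
From mathcomp Require Import ring lra zify.
Import Order.TTheory GRing.Theory Num.Theory.
Local Open Scope ring_scope.
Set Implicit Arguments. Unset Strict Implicit. Unset Printing Implicit Defensive.

Section Gen.
Variable R : realType.
Variables m n : nat.
Implicit Types (Q : outcome m -> R) (x : 'I_n -> 'I_m -> R) (y : outcome m) (z : 'I_m -> R).

Definition sqd (z : 'I_m -> R) (y : outcome m) : R :=
  \sum_(k < m) (z k - (y k)%:R) ^+ 2.
Definition corner (y : outcome m) : 'I_m -> R := fun k => (y k)%:R.

Lemma sqd_ge0 z y : 0 <= sqd z y.
Proof. by apply: sumr_ge0 => k _; apply: sqr_ge0. Qed.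

Lemma dist_le z1 z2 y : (dist z1 y <= dist z2 y) = (sqd z1 y <= sqd z2 y).
Proof. by rewrite /dist ler_sqrt // sqd_ge0. Qed.

Lemma sqd_eq0P z y : reflect (forall k, z k = (y k)%:R) (sqd z y == 0).
Proof.
apply: (iffP idP) => [/eqP h k|h].
  have := @psumr_eq0P R _ xpredT (fun k => (z k - (y k)%:R) ^+ 2) (fun k _ => sqr_ge0 _) h k isT.
  by move/eqP; rewrite sqrf_eq0 subr_eq0 => /eqP.
by rewrite /sqd big1 // => k _; rewrite h subrr expr0n.
Qed.

Lemma sqd_corner y y' : sqd (corner y) y' = \sum_(k < m) (y k != y' k)%:R.
Proof.
apply: eq_bigr => k _; rewrite /corner.
by case: (y k); case: (y' k); rewrite /= ?subrr ?expr0n ?subr0 ?sub0r ?sqrrN ?expr1n.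
Qed.

Lemma sqd_at z y y' : sqd z y == 0 -> sqd z y' = sqd (corner y) y'.
Proof. by move/sqd_eq0P=> h; apply: eq_bigr => k _; rewrite h. Qed.

Lemma corner_inj y y' : (forall k, (y k)%:R = (y' k)%:R :> R) -> y = y'.
Proof.
move=> h; apply/ffunP => k; have := h k.
by case: (y k); case: (y' k) => //= /eqP; rewrite ?oner_eq0 // eq_sym oner_eq0.
Qed.

Lemma sqd_corner0 y : sqd (corner y) y = 0.
Proof. by apply/eqP/sqd_eq0P. Qed.

Definition occ x y := [set j | sqd (x j) y == 0].

Lemma Xmin_occ x y j0 : sqd (x j0) y == 0 -> Xmin x y = occ x y.
Proof.
move=> h0; apply/setP => j; rewrite !inE; apply/forallP/idP => [h|h k].
  have := h j0; rewrite dist_le (eqP h0) => hle.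
  by rewrite eq_le hle sqd_ge0.
by rewrite dist_le (eqP h) sqd_ge0.
Qed.

Definition term Q x i y := Q y * ((i \in Xmin x y)%:R / (#|Xmin x y|)%:R).

Lemma term_ge0 Q x i y : (forall y, 0 <= Q y) -> 0 <= term Q x i y.
Proof. by move=> hQ; rewrite /term mulr_ge0 // divr_ge0. Qed.

Lemma util_ge_term Q x i y : (forall y, 0 <= Q y) -> term Q x i y <= utility Q x i.
Proof.
move=> hQ; rewrite /utility (bigD1 y) //= -/(term Q x i y) lerDl.
by apply: sumr_ge0 => z _; apply: term_ge0.
Qed.

Lemma util_ge_2term Q x i y y' : (forall y, 0 <= Q y) -> y != y' ->
  term Q x i y + term Q x i y' <= utility Q x i.
Proof.
move=> hQ ne; rewrite /utility (bigD1 y) //= (bigD1 y') 1?eq_sym //=.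
rewrite -/(term Q x i y) -/(term Q x i y') addrA lerDl.
by apply: sumr_ge0 => z _; apply: term_ge0.
Qed.

Lemma term_lb Q x i y c : (forall y, 0 <= Q y) -> i \in Xmin x y ->
  (#|Xmin x y| <= c.+1)%N -> Q y / (c.+1)%:R <= term Q x i y.
Proof.
move=> hQ hi hc; rewrite /term hi mul1r ler_wpM2l //.
have hp : (0 < #|Xmin x y|)%N by apply/card_gt0P; exists i.
by rewrite lef_pV2 ?posrE ?ltr0n // ler_nat.
Qed.

Lemma sum_util_le1 Q x : is_distr Q -> \sum_i utility Q x i <= 1.
Proof.
move=> [hQ h1]; rewrite /utility exchange_big /= -[X in _ <= X]h1.
apply: ler_sum => y _; rewrite -mulr_sumr.
rewrite -{2}[Q y]mulr1 ler_wpM2l // -mulr_suml.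
have -> : \sum_i (i \in Xmin x y)%:R = (#|Xmin x y|)%:R :> R.
  rewrite -sumr_const [RHS]big_mkcond /=; apply: eq_bigr => i _.
  by case: (i \in Xmin x y).
have [->|nz] := eqVneq #|Xmin x y| 0%N; first by rewrite mul0r.
by rewrite divff // pnatr_eq0.
Qed.

Lemma exists_low Q x : (0 < n)%N -> is_distr Q ->
  exists i, utility Q x i <= n%:R^-1.
Proof.
move=> hn hQ; case: (boolP [exists i, utility Q x i <= n%:R^-1]) => [/existsP//|/existsPn h].
exfalso; have : \sum_(i < n) n%:R^-1 < \sum_i utility Q x i :> R.
  apply: ltr_sum; first by apply/hasP; exists (Ordinal hn); rewrite ?mem_index_enum.
  by move=> i _; have := h i; rewrite -ltNge.
have e1 : (n%:R^-1 *+ n = 1 :> R).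
  by rewrite -[RHS](@mulVf _ n%:R) ?mulr_natr // pnatr_eq0 -lt0n.
rewrite sumr_const card_ord e1.
by rewrite ltNge sum_util_le1.
Qed.

Lemma in_cube_corner y : in_cube (corner y).
Proof. by move=> k; rewrite /corner; case: (y k) => /=; rewrite ?lexx ?ler01. Qed.

Lemma dev_term Q x i y : (forall y, 0 <= Q y) ->
  Q y / (#|[set j | (j != i) && (sqd (x j) y == 0)]|.+1)%:R
    <= term Q (deviate x i (corner y)) i y.
Proof.
move=> hQ; set x' := deviate x i (corner y).
have hi : sqd (x' i) y == 0 by rewrite /x' /deviate eqxx sqd_corner0.
apply: term_lb => //; rewrite (@Xmin_occ x' y i hi).
  by rewrite inE.
rewrite -add1n -(cards1 i); apply: leq_trans (leq_card_setU _ _) => //.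
apply: subset_leq_card; apply/subsetP => j; rewrite !inE /x' /deviate.
by case: (j =P i) => //= ->.
Qed.


Lemma divr_le2 (v s t : R) : 0 <= v -> 0 < s -> s <= t -> v / t <= v / s.
Proof.
move=> hv hs hst; rewrite ler_wpM2l // lef_pV2 ?posrE //.
exact: lt_le_trans hst.
Qed.

End Gen.

Definition i0 : 'I_2 := ord0.
Definition i1 : 'I_2 := @Ordinal 2 1 isT.
Definition mk (b0 b1 : bool) : outcome 2 := [ffun k : 'I_2 => if k == i0 then b0 else b1].

Lemma outcome2 (y : outcome 2) : y = mk (y i0) (y i1).
Proof.
apply/ffunP => k; rewrite ffunE; case: k => [[|[|k']] hk] //=.
- by congr (y _); apply: val_inj.
- by congr (y _); apply: val_inj.
Qed.

Lemma mkE b0 b1 : (mk b0 b1 i0 = b0) * (mk b0 b1 i1 = b1).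
Proof. by rewrite !ffunE. Qed.

Lemma sqd_c2 (R : realType) (y y' : outcome 2) :
  sqd (corner R y) y' = ((y i0 != y' i0) + (y i1 != y' i1))%:R.
Proof.
rewrite sqd_corner big_ord_recl big_ord_recl big_ord0 addr0 natrD.
have -> : lift ord0 ord0 = i1 :> 'I_2 by apply: val_inj.
by [].
Qed.

Lemma mk_eq a b c d : (mk a b == mk c d) = (a == c) && (b == d).
Proof.
apply/eqP/andP => [h|[/eqP-> /eqP->]//]; split; apply/eqP.
  by have := congr1 (fun f : outcome 2 => f i0) h; rewrite !mkE.
by have := congr1 (fun f : outcome 2 => f i1) h; rewrite !mkE.
Qed.

Lemma cardU0 (T : finType) (S U : {set T}) : S :&: U = set0 -> #|S :|: U| = (#|S| + #|U|)%N.
Proof. by move=> h; rewrite cardsU h cards0 subn0. Qed.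

Lemma sqd_cA (R : realType) (y : outcome 2) : y != mk false false ->
  1 <= sqd (corner R y) (mk false false).
Proof.
rewrite sqd_c2 !mkE (outcome2 y) !mkE mk_eq.
by case: (y i0); case: (y i1); rewrite //= ?lexx ?ler1n.
Qed.

Lemma sqd_BA (R : realType) : sqd (corner R (mk false true)) (mk false false) = 1.
Proof. by rewrite sqd_c2 !mkE. Qed.

Lemma sqd_HA (R : realType) : sqd (corner R (mk true true)) (mk false false) = 2%:R.
Proof. by rewrite sqd_c2 !mkE. Qed.

Section Two.
Variables (R : realType) (n : nat) (Q : outcome 2 -> R).
Definition yA := mk false false.
Definition yB := mk false true.
Definition yC := mk true false.
Definition yH := mk true true.
Hypotheses (hD : is_distr Q) (hn : (0 < n)%N) (hlow : forall y, n%:R^-1 < Q y)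
  (hA : Q yA / 2 < Q yH / (n%:R - 3)) (hC : Q yC / 2 < Q yH / (n%:R - 3))
  (hB : Q yB / 2 < Q yH / (n%:R - 3)) (hbon : Q yA < Q yB / 2 + Q yA / 3).

Lemma hQ0 : forall y, 0 <= Q y.
Proof. by case: hD. Qed.


Lemma noNE2 : ~ exists x : 'I_n -> 'I_2 -> R, pure_NE Q x.
Proof.
move=> [x [hcube hNE]].
have [i hi] := exists_low x hn hD.
have hdevu : forall k y, Q y / (#|[set j | (j != k) && (sqd (x j) y == 0)]|.+1)%:R
    <= utility Q x k.
  move=> k y; have h1 := dev_term x k y hQ0.
  have h2 := util_ge_term (deviate x k (corner R y)) k y hQ0.
  have h3 := hNE k (corner R y) (in_cube_corner _ _).
  exact: (le_trans h1 (le_trans h2 h3)).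
have occ_other : forall y, exists j, (j != i) && (j \in occ x y).
  move=> y; case: (boolP [exists j, (j != i) && (j \in occ x y)]) => [/existsP //|/existsPn hno].
  exfalso.
  have e : [set j | (j != i) && (sqd (x j) y == 0)] = set0.
    by apply/setP=> j; rewrite !inE; apply/negbTE; have := hno j; rewrite inE.
  have := hdevu i y; rewrite e cards0 divr1 => h.
  have := hlow y; have := le_trans h hi; rewrite ltNge => ->; done.
have XE : forall y, Xmin x y = occ x y.
  move=> y; have [j /andP [_ hj]] := occ_other y; rewrite inE in hj.
  exact: Xmin_occ hj.
have disj : forall k y y', k \in occ x y -> k \in occ x y' -> y = y'.
  move=> k y y'; rewrite !inE => /sqd_eq0P h1 /sqd_eq0P h2.
  by apply: (@corner_inj R) => t; rewrite -h1 -h2.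
have cover : forall k, exists y, k \in occ x y.
  move=> k; case: (boolP [exists y, k \in occ x y]) => [/existsP //|/existsPn hno].
  exfalso.
  have u0 : utility Q x k = 0.
    rewrite /utility big1 // => y _; rewrite XE (negbTE (hno y)) mul0r mulr0 //.
  have := hdevu k yA; rewrite u0.
  have : 0 < Q yA / (#|[set j | (j != k) && (sqd (x j) yA == 0)]|.+1)%:R.
    by rewrite divr_gt0 // (le_lt_trans _ (hlow yA)) // invr_ge0 ler0n.
  by move=> h1 h2; have := lt_le_trans h1 h2; rewrite ltxx.
have uval : forall k y, k \in occ x y -> utility Q x k <= Q y / (#|occ x y|)%:R.
  move=> k y hk; rewrite /utility (bigD1 y) //= big1 => [|y' ne].
    by rewrite XE hk addr0 mul1r.
  rewrite XE; case: (boolP (k \in occ x y')) => h.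
    by rewrite (disj _ _ _ hk h) eqxx in ne.
  by rewrite mul0r mulr0.
have hsub : forall k y, (#|[set j | (j != k) && (sqd (x j) y == 0%R)]| <= #|occ x y|)%N.
  move=> k y; apply: subset_leq_card; apply/subsetP => j; rewrite !inE.
  by case/andP.
have neq : forall k y y', k \in occ x y -> y' != y ->
    Q y' / (#|occ x y'|.+1)%:R <= Q y / (#|occ x y|)%:R.
  move=> k y y' hk ne.
  have h1 := uval k y hk.
  have h2 := hdevu k y'.
  have h3 : Q y' / (#|occ x y'|.+1)%:R <=
     Q y' / (#|[set j | (j != k) && (sqd (x j) y' == 0)]|.+1)%:R.
    by apply: divr_le2; rewrite ?hQ0 ?ltr0n // ler_nat ltnS hsub.
  exact: (le_trans h3 (le_trans h2 h1)).
have bonus : forall k, k \in occ x yA -> #|occ x yA| = 1%N ->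
   Q yB / (#|occ x yB|.+1)%:R + Q yA / ((#|occ x yB| + #|occ x yC|).+1)%:R <= Q yA.
  move=> k hk c1.
  set x' := deviate x k (corner R yB).
  have hx'k : x' k = corner R yB by rewrite /x' /deviate eqxx.
  have hx'j : forall j, j != k -> x' j = x j.
    by move=> j /negbTE hj; rewrite /x' /deviate hj.
  have onlyk : forall j, j \in occ x yA -> j = k.
    move: c1 => /eqP /cards1P [a ha] j; rewrite ha inE => /eqP ->.
    by move: hk; rewrite ha inE => /eqP ->.
  have t1 : Q yB / (#|occ x yB|.+1)%:R <= term Q x' k yB.
    have h2 := dev_term x k yB hQ0.
    have h3 : Q yB / (#|occ x yB|.+1)%:R <=
       Q yB / (#|[set j | (j != k) && (sqd (x j) yB == 0)]|.+1)%:R.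
      by apply: divr_le2; rewrite ?hQ0 ?ltr0n // ler_nat ltnS hsub.
    exact: (le_trans h3 h2).
  have dj : forall j, j != k -> exists2 y, y != yA & sqd (x j) y == 0.
    move=> j ne; have [y hy] := cover j; exists y => //.
      by apply/eqP => e; move: hy; rewrite e => /onlyk e'; rewrite e' eqxx in ne.
    by rewrite inE in hy.
  have t2 : Q yA / ((#|occ x yB| + #|occ x yC|).+1)%:R <= term Q x' k yA.
    apply: term_lb; first exact: hQ0.
      rewrite inE; apply/forallP => j; rewrite dist_le hx'k.
      case: (eqVneq j k) => [->|ne]; first by rewrite hx'k.
      rewrite hx'j // sqd_BA; have [y yne hy] := dj j ne.
      by rewrite (sqd_at _ hy); apply: sqd_cA.
    have sub : Xmin x' yA \subset k |: (occ x yB :|: occ x yC).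
      apply/subsetP => j; rewrite !inE => /forallP /(_ k); rewrite !dist_le hx'k sqd_BA.
      case: (eqVneq j k) => [->|ne]; first by [].
      rewrite hx'j //; have [y yne hy] := dj j ne.
      rewrite (sqd_at _ hy) /=.
      move: yne hy; rewrite /yA /yB /yC (outcome2 y) mk_eq.
      case: (y i0); case: (y i1) => //= _ hy; rewrite ?hy ?orbT //.
      by rewrite sqd_HA => h; exfalso; lra.
    apply: (leq_trans (subset_leq_card sub)).
    apply: leq_trans (leq_card_setU _ _) _.
    by rewrite cards1 add1n ltnS leq_card_setU.
  have nBA : yB != yA by rewrite /yA /yB mk_eq.
  have h4 := util_ge_2term x' k hQ0 nBA.
  have h5 := hNE k (corner R yB) (in_cube_corner _ _).
  have h6 := uval k yA hk; rewrite c1 divr1 in h6.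
  exact: (le_trans (lerD t1 t2) (le_trans h4 (le_trans h5 h6))).
have pos : forall y, (0 < #|occ x y|)%N.
  by move=> y; have [j /andP [_ hj]] := occ_other y; apply/card_gt0P; exists j.
have dI : forall y y', y != y' -> occ x y :&: occ x y' = set0.
  move=> y y' ne; apply/setP => j; rewrite !inE.
  apply/negbTE/negP => /andP [h1 h2].
  have e := disj j y y'; rewrite !inE in e; by rewrite (e h1 h2) eqxx in ne.
have tot : (#|occ x yA| + #|occ x yB| + #|occ x yC| + #|occ x yH| <= n)%N.
  have e1 : #|occ x yA :|: occ x yB| = (#|occ x yA| + #|occ x yB|)%N.
    by rewrite cardU0 // dI // mk_eq.
  have e2 : #|occ x yA :|: occ x yB :|: occ x yC| =
      (#|occ x yA| + #|occ x yB| + #|occ x yC|)%N.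
    by rewrite cardU0 ?e1 // setIUl !dI ?mk_eq // setU0.
  have e3 : #|occ x yA :|: occ x yB :|: occ x yC :|: occ x yH| =
      (#|occ x yA| + #|occ x yB| + #|occ x yC| + #|occ x yH|)%N.
    by rewrite cardU0 ?e2 // !setIUl !dI ?mk_eq // !setU0.
  by rewrite -e3 -[X in (_ <= X)%N]card_ord max_card.
have N3 : forall hh, (hh + 4 <= n)%N -> Q yH / (n%:R - 3) <= Q yH / (hh.+1)%:R.
  move=> hh hle; apply: divr_le2; rewrite ?hQ0 ?ltr0n //.
  have : ((hh + 4)%:R <= n%:R :> R) by rewrite ler_nat.
  rewrite natrD -addn1 natrD => h; lra.
have pick : forall y, exists k, k \in occ x y.
  by move=> y; have [j /andP [_ hj]] := occ_other y; exists j.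
have nHA : yH != yA by rewrite mk_eq.
have nHB : yH != yB by rewrite mk_eq.
have nHC : yH != yC by rewrite mk_eq.
have posA := pos yA; have posB := pos yB; have posC := pos yC; have posH := pos yH.
case: (leqP 2 #|occ x yA|) => ha.
  have [k hk] := pick yA.
  have h1 := neq k yA yH hk nHA.
  have h2 := N3 #|occ x yH| ltac:(lia).
  have h3 : Q yA / (#|occ x yA|)%:R <= Q yA / 2.
    by apply: divr_le2; rewrite ?hQ0 // (ler_nat R 2).
  have := lt_le_trans hA (le_trans h2 (le_trans h1 h3)); by rewrite ltxx.
case: (leqP 2 #|occ x yC|) => hc.
  have [k hk] := pick yC.
  have h1 := neq k yC yH hk nHC.
  have h2 := N3 #|occ x yH| ltac:(lia).
  have h3 : Q yC / (#|occ x yC|)%:R <= Q yC / 2.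
    by apply: divr_le2; rewrite ?hQ0 // (ler_nat R 2).
  have := lt_le_trans hC (le_trans h2 (le_trans h1 h3)); by rewrite ltxx.
case: (leqP 2 #|occ x yB|) => hb.
  have [k hk] := pick yB.
  have h1 := neq k yB yH hk nHB.
  have h2 := N3 #|occ x yH| ltac:(lia).
  have h3 : Q yB / (#|occ x yB|)%:R <= Q yB / 2.
    by apply: divr_le2; rewrite ?hQ0 // (ler_nat R 2).
  have := lt_le_trans hB (le_trans h2 (le_trans h1 h3)); by rewrite ltxx.
have ea : #|occ x yA| = 1%N by lia.
have eb : #|occ x yB| = 1%N by lia.
have ec : #|occ x yC| = 1%N by lia.
have [k hk] := pick yA.
have := bonus k hk ea; rewrite eb ec => h.
have := lt_le_trans hbon h; by rewrite ltxx.
Qed.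
End Two.

Lemma sum_outcome2 (R : realType) (F : outcome 2 -> R) :
  \sum_y F y = F (mk true true) + F (mk true false) + (F (mk false true) + F (mk false false)).
Proof.
rewrite (reindex (fun p : bool * bool => mk p.1 p.2)) /=.
  by rewrite -(pair_big xpredT xpredT (fun a b => F (mk a b))) /= !big_bool.
exists (fun y : outcome 2 => (y i0, y i1)) => [[a b] _|y _] /=; first by rewrite !mkE.
by rewrite -outcome2.
Qed.

Theorem lemma4 (R : realType) (eps : R) :
  1 / 2 < eps < 1 ->
  exists (m n : nat) (Q : outcome m -> R),
    (0 < n)%N /\ is_distr Q /\ p0 Q = (2 - eps) / n%:R /\
    ~ (exists x : 'I_n -> 'I_m -> R, pure_NE Q x).
Proof.
move=> /andP [he1 he2].
have hpos : 0 <= 12 / (2 * eps - 1) by rewrite divr_ge0 //; lra.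
set n := Num.Def.archi_bound (12 / (2 * eps - 1)).
have hn := archi_boundP hpos; rewrite -/n in hn.
set N := n%:R : R.
have hNe : 12 < N * (2 * eps - 1).
  by rewrite -ltr_pdivrMr; [exact: hn | lra].
have hN12 : 12 < N by nra.
have hN0 : N != 0 by apply/eqP => e; rewrite e in hN12; lra.
have hN3 : N - 3 != 0 by apply/eqP => e; lra.
have hn0 : (0 < n)%N by rewrite -(ltr0n R) -/N; lra.
pose p := (2 - eps) / N.
pose q := 2 * (N - 2 * (2 - eps)) / N ^+ 2.
pose H := (N - 2 * (2 - eps)) * (N - 2) / N ^+ 2.
pose Q := fun y : outcome 2 => if y i1 then (if y i0 then H else q) else p.
have gt : forall a b num den : R, a - b = num / den -> 0 < num -> 0 < den -> b < a.
  by move=> a b num den e h1 h2; rewrite -subr_gt0 e divr_gt0.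
have N2 : 0 < N ^+ 2 by rewrite exprn_gt0 //; lra.
have lp : N^-1 < p.
  apply: (gt _ _ (1 - eps) N); [rewrite /p; field; exact: hN0 | lra | lra].
have lq : N^-1 < q.
  apply: (gt _ _ (N - 4 * (2 - eps)) (N ^+ 2)); [rewrite /q; field; exact: hN0 | lra | done].
have lH : N^-1 < H.
  apply: (gt _ _ ((N - 2 * (2 - eps)) * (N - 2) - N) (N ^+ 2));
    [rewrite /H; field; exact: hN0 | nra | done].
have pq : p <= q.
  apply/ltW; apply: (gt _ _ (eps * N - 4 * (2 - eps)) (N ^+ 2));
    [rewrite /p /q; field; exact: hN0 | nra | done].
have pH : p <= H.
  apply/ltW; apply: (gt _ _ ((N - 2 * (2 - eps)) * (N - 2) - (2 - eps) * N) (N ^+ 2));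
    [rewrite /p /H; field; exact: hN0 | nra | done].
have N0 : 0 < N^-1 by rewrite invr_gt0; lra.
exists 2%N, n, Q; split; first exact: hn0.
have hD : is_distr Q.
  split; first by move=> y; rewrite /Q; case: (y i1); case: (y i0); lra.
  rewrite sum_outcome2 /Q !mkE /p /q /H; field; exact: hN0.
split; first exact: hD.
split.
  have e0 : Q [ffun => false] = p by rewrite /Q !ffunE.
  apply/eqP; rewrite eq_le; apply/andP; split.
    by have := bigmin_le (Q [ffun => false]) (mk false false) Q; rewrite /Q !mkE.
  apply: le_bigmin; first by rewrite e0.
  by move=> y _; rewrite /Q; case: (y i1); case: (y i0).
apply: noNE2 => //.
- by move=> y; rewrite /Q; case: (y i1); case: (y i0).
- rewrite /Q /yA /yH !mkE.
  apply: (gt _ _ (eps * N ^+ 2 - (4 + (2 - eps)) * N + 8 * (2 - eps)) (2 * N ^+ 2 * (N - 3)));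
    [rewrite /p /H; field; by rewrite hN0 hN3 | nra | nra].
- rewrite /Q /yC /yH !mkE.
  apply: (gt _ _ (eps * N ^+ 2 - (4 + (2 - eps)) * N + 8 * (2 - eps)) (2 * N ^+ 2 * (N - 3)));
    [rewrite /p /H; field; by rewrite hN0 hN3 | nra | nra].
- rewrite /Q /yB /yH !mkE.
  apply: (gt _ _ (N - 2 * (2 - eps)) (N ^+ 2 * (N - 3)));
    [rewrite /q /H; field; by rewrite hN0 hN3 | lra | nra].
- rewrite /Q /yA /yB !mkE.
  apply: (gt _ _ (N * (2 * eps - 1) - 6 * (2 - eps)) (3 * N ^+ 2));
    [rewrite /p /q; field; exact: hN0 | lra | lra].
Qed.
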